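(* Let $a,\omega_1,\omega_2,\mu\in\mathbb{R}$ with $a\neq0$, and on $T^*\mathbb{R}^2$ with coordinates $(p_x,p_y,x,y)$ let \[H_{\mathrm{KdV}_5}=\tfrac12(p_x^2+p_y^2)+\tfrac12(\omega_1x^2+\omega_2y^2)+axy^2+2ax^3+\tfrac{\mu}{2y^2},\] \[K_{\mathrm{KdV}_5}=4ay\,p_xp_y+(4\omega_2-\omega_1-4ax)\Bigl(p_y^2+\tfrac{\mu}{y^2}\Bigr)+a^2y^4+4a^2x^2y^2+4a\omega_2xy^2+\omega_2(4\omega_2-\omega_1)y^2.\] Consider new variables $(P_1,P_2,X,Y)$, on an open set where $XY<0$ and $X\neq Y$, related to the old ones by \[x=\tfrac{2X+2Y-\omega_1+4\omega_2}{4a},\quad y=\tfrac{\sqrt{-XY}}{a},\quad p_x=2a\,\tfrac{XP_1-YP_2}{X-Y},\quad p_y=2a\sqrt{-XY}\,\tfrac{P_1-P_2}{X-Y}.\] Then $p_x\,dx+p_y\,dy=P_1\,dX+P_2\,dY$ (so the change of variables is canonical), and, with \[\Phi(\xi,\pi)=\frac{4\xi^5+(-4\omega_1+24\omega_2)\xi^4+(\omega_1-4\omega_2)(\omega_1-12\omega_2)\xi^3+\bigl(32a^4\pi^2+2\omega_1^2\omega_2-16\omega_1\omega_2^2+32\omega_2^3\bigr)\xi^2+8\mu a^4}{16\xi a^2},\] one has \[H_{\mathrm{KdV}_5}=\frac{\Phi(X,P_1)-\Phi(Y,P_2)}{X-Y},\qquad K_{\mathrm{KdV}_5}=\frac{4X\,\Phi(Y,P_2)-4Y\,\Phi(X,P_1)}{X-Y}.\]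 Consequently, on the common level set $H_{\mathrm{KdV}_5}=E$, $K_{\mathrm{KdV}_5}=K$ the separated relations $\Phi(X,P_1)-EX-\frac K4=0$ and $\Phi(Y,P_2)-EY-\frac K4=0$ hold. *)

(* Defs.v *)
From Stdlib Require Import Reals.
From Coquelicot Require Import Coquelicot.
Open Scope R_scope.

Definition H_KdV5 (a w1 w2 mu px py x y : R) : R :=
  / 2 * (px ^ 2 + py ^ 2) + / 2 * (w1 * x ^ 2 + w2 * y ^ 2)
  + a * x * y ^ 2 + 2 * a * x ^ 3 + mu / (2 * y ^ 2).

Definition K_KdV5 (a w1 w2 mu px py x y : R) : R :=
  4 * a * y * px * py + (4 * w2 - w1 - 4 * a * x) * (py ^ 2 + mu / y ^ 2)
  + a ^ 2 * y ^ 4 + 4 * a ^ 2 * x ^ 2 * y ^ 2 + 4 * a * w2 * x * y ^ 2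
  + w2 * (4 * w2 - w1) * y ^ 2.

Definition Phi (a w1 w2 mu xi p : R) : R :=
  (4 * xi ^ 5 + (- 4 * w1 + 24 * w2) * xi ^ 4
   + (w1 - 4 * w2) * (w1 - 12 * w2) * xi ^ 3
   + (32 * a ^ 4 * p ^ 2 + 2 * w1 ^ 2 * w2 - 16 * w1 * w2 ^ 2 + 32 * w2 ^ 3) * xi ^ 2
   + 8 * mu * a ^ 4) / (16 * xi * a ^ 2).

Definition x_of (a w1 w2 X Y : R) : R := (2 * X + 2 * Y - w1 + 4 * w2) / (4 * a).
Definition y_of (a X Y : R) : R := sqrt (- (X * Y)) / a.
Definition px_of (a P1 P2 X Y : R) : R := 2 * a * ((X * P1 - Y * P2) / (X - Y)).
Definition py_of (a P1 P2 X Y : R) : R := 2 * a * sqrt (- (X * Y)) * ((P1 - P2) / (X - Y)).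

(* Main.v *)
Require Import Defs.
From Stdlib Require Import Reals Lra Psatz.
From Coquelicot Require Import Coquelicot.
Open Scope R_scope.

Lemma alg (a w1 w2 mu P1 P2 X Y s : R) : a <> 0 -> X <> 0 -> s <> 0 -> X <> Y -> Y <> 0 ->
  Y = -(s*s)/X ->
  let x := (2 * X + 2 * Y - w1 + 4 * w2) / (4 * a) in
  let y := s / a in
  let px := 2 * a * ((X * P1 - Y * P2) / (X - Y)) in
  let py := 2 * a * s * ((P1 - P2) / (X - Y)) in
  H_KdV5 a w1 w2 mu px py x y
    = (Phi a w1 w2 mu X P1 - Phi a w1 w2 mu Y P2) / (X - Y) /\
  K_KdV5 a w1 w2 mu px py x y
    = (4 * X * Phi a w1 w2 mu Y P2 - 4 * Y * Phi a w1 w2 mu X P1) / (X - Y).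
Proof.
intros Ha HX Hs HXY HY0 HY x y px py.
assert (Hd : X - Y <> 0) by lra.
unfold H_KdV5, K_KdV5, Phi, x, y, px, py.
rewrite HY in Hd, HY0 |- *.
assert (HXX : 0 < X*X) by (destruct (Rlt_or_le 0 X); [nra| destruct H; [nra| congruence]]).
split; field; repeat split; auto; nra.
Qed.

Theorem mainTheorem3 (a w1 w2 mu : R) (Ha : a <> 0) :
  forall P1 P2 X Y : R, X * Y < 0 -> X <> Y ->
  let x := x_of a w1 w2 X Y in
  let y := y_of a X Y in
  let px := px_of a P1 P2 X Y in
  let py := py_of a P1 P2 X Y in
  (* canonicity: px dx + py dy = P1 dX + P2 dY, written componentwise *)
  (ex_derive (fun t => x_of a w1 w2 t Y) X /\ ex_derive (fun t => y_of a t Y) X /\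
   ex_derive (fun t => x_of a w1 w2 X t) Y /\ ex_derive (fun t => y_of a X t) Y /\
   px * Derive (fun t => x_of a w1 w2 t Y) X + py * Derive (fun t => y_of a t Y) X = P1 /\
   px * Derive (fun t => x_of a w1 w2 X t) Y + py * Derive (fun t => y_of a X t) Y = P2) /\
  H_KdV5 a w1 w2 mu px py x y
    = (Phi a w1 w2 mu X P1 - Phi a w1 w2 mu Y P2) / (X - Y) /\
  K_KdV5 a w1 w2 mu px py x y
    = (4 * X * Phi a w1 w2 mu Y P2 - 4 * Y * Phi a w1 w2 mu X P1) / (X - Y) /\
  (forall E K : R,
     H_KdV5 a w1 w2 mu px py x y = E -> K_KdV5 a w1 w2 mu px py x y = K ->
     Phi a w1 w2 mu X P1 - E * X - K / 4 = 0 /\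
     Phi a w1 w2 mu Y P2 - E * Y - K / 4 = 0).
Proof.
intros P1 P2 X Y HXY HXneY x y px py.
set (s := sqrt (- (X * Y))).
assert (Hs0 : 0 < s) by (apply sqrt_lt_R0; lra).
assert (Hss : s * s = - (X * Y)) by (apply sqrt_sqrt; lra).
assert (HX : X <> 0) by (intro h; subst; lra).
assert (HY0 : Y <> 0) by (intro h; subst; lra).
assert (HY : Y = - (s*s)/X) by (rewrite Hss; field; auto).
assert (Hd : X - Y <> 0) by lra.
assert (D1 : is_derive (fun t => x_of a w1 w2 t Y) X (/(2*a))).
{ unfold x_of. auto_derive; auto. field; auto. }
assert (D2 : is_derive (fun t => y_of a t Y) X (-Y/(2*s)/a)).
{ unfold y_of. auto_derive; [lra|]. fold s. field; split; lra. }
assert (D3 : is_derive (fun t => x_of a w1 w2 X t) Y (/(2*a))).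
{ unfold x_of. auto_derive; auto. field; auto. }
assert (D4 : is_derive (fun t => y_of a X t) Y (-X/(2*s)/a)).
{ unfold y_of. auto_derive; [lra|]. fold s. field; split; lra. }
destruct (alg a w1 w2 mu P1 P2 X Y s Ha HX ltac:(lra) HXneY HY0 HY) as [EH EK].
assert (EH' : H_KdV5 a w1 w2 mu px py x y = (Phi a w1 w2 mu X P1 - Phi a w1 w2 mu Y P2) / (X - Y))
  by (rewrite <- EH; reflexivity).
assert (EK' : K_KdV5 a w1 w2 mu px py x y = (4 * X * Phi a w1 w2 mu Y P2 - 4 * Y * Phi a w1 w2 mu X P1) / (X - Y))
  by (rewrite <- EK; reflexivity).
split; [|split; [exact EH'|split; [exact EK'|]]].
- repeat split; try (eexists; eassumption).
  + replace (Derive (fun t => x_of a w1 w2 t Y) X) with (/(2*a)) by (symmetry; apply is_derive_unique; exact D1).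
    replace (Derive (fun t => y_of a t Y) X) with (-Y/(2*s)/a) by (symmetry; apply is_derive_unique; exact D2).
    unfold px, py, px_of, py_of. fold s. field; repeat split; lra.
  + replace (Derive (fun t => x_of a w1 w2 X t) Y) with (/(2*a)) by (symmetry; apply is_derive_unique; exact D3).
    replace (Derive (fun t => y_of a X t) Y) with (-X/(2*s)/a) by (symmetry; apply is_derive_unique; exact D4).
    unfold px, py, px_of, py_of. fold s.
    field; repeat split; lra.
- intros E K HE HK. rewrite EH' in HE. rewrite EK' in HK. subst E K.
  generalize (Phi a w1 w2 mu X P1) (Phi a w1 w2 mu Y P2). intros A B.
  split; field; auto.
Qed.
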